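(* The fraction of algebraic tangle expressions is invariant under the elementary moves, twists, flypes and ring moves; explicitly, for every algebraic tangle expression $A$ (products being left-associative, $2:=101$, $\overline2:=\overline1 0\overline1$): (i) elementary moves: $\mathrm{Frac}(01)=\mathrm{Frac}(00)$ and $\mathrm{Frac}(10\overline1)=\mathrm{Frac}(0)=\mathrm{Frac}(\overline101)$; (ii) twist: $\mathrm{Frac}(10\rho_x(A)0\overline1)=\mathrm{Frac}(A)=\mathrm{Frac}(\overline10\rho_x(A)01)$; (iii) flypes: $\mathrm{Frac}(\overline A\,\overline1\,1\,\overline1)=\mathrm{Frac}(\overline A\,0\,1\,\overline1\,1\,0)=\mathrm{Frac}(A)=\mathrm{Frac}(\overline A\,0\,\overline1\,1\,\overline1\,0)=\mathrm{Frac}(\overline A\,1\,\overline1\,1)$; (iv) ring move: $\mathrm{Frac}\bigl(A0(2(\overline20)0)\bigr)=\mathrm{Frac}\bigl(2(\overline20)A\bigr)$.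
   Context: Algebraic tangle expressions are built from the basic tangles $0,\infty,1,\overline1$ by sums and products $AB:=A0+B$, where $A0$ denotes the reflection of $A$ under $(x,y,z)\mapsto(-y,-x,z)$; products are left-associative ($ABC=(AB)C$). $\overline A$ is the expression obtained from $A$ by swapping every $1$ with $\overline1$ (the mirror image). The fraction is defined recursively by $\mathrm{Frac}(0)=0$, $\mathrm{Frac}(\infty)=\infty$, $\mathrm{Frac}(1)=1$, $\mathrm{Frac}(\overline1)=-1$, $\mathrm{Frac}(LR)=\mathrm{Frac}(R)+1/\mathrm{Frac}(L)$, in $\mathbb{Q}\cup\{\infty\}$ with $1/0=\infty$, $1/\infty=0$, $x+\infty=\infty+x=\infty$, $-\infty=\infty$. The rotation $\rho_x$ (by $\pi$ about the $x$-axis) acts on expressions recursively by $\rho_x(c)=\rho_y(c)=c$ for basic $c$, $\rho_x(LR)=\rho_y(L)\rho_x(R)$, $\rho_y(LR)=(\rho_y(R)0)(\rho_x(L)0)$. *)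

(* Defs.v *)
From HB Require Import structures.
From mathcomp Require Import all_boot all_order all_algebra.
Set Implicit Arguments. Unset Strict Implicit. Unset Printing Implicit Defensive.
Import Order.TTheory GRing.Theory Num.Theory.
Local Open Scope ring_scope.

(* Algebraic tangle expressions: basic tangles 0, oo, 1, 1bar and products LR.
   (The sum A + B equals the product (A0)B, since A00 = A, so it needs no
   separate constructor.) *)
Inductive texpr : Type :=
  | T0 : texpr
  | Tinf : texpr
  | T1 : texpr
  | T1bar : texpr
  | Tprod : texpr -> texpr -> texpr.

(* Extended rationals Q ∪ {oo}; None stands for oo. *)
Definition qext := option rat.

Definition qinv (x : qext) : qext :=
  match x with
  | None => Some 0
  | Some q => if q == 0 then None else Some q^-1
  end.

Definition qadd (x y : qext) : qext :=
  match x, y with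
  | Some a, Some b => Some (a + b)
  | _, _ => None
  end.

Fixpoint Frac (e : texpr) : qext :=
  match e with
  | T0 => Some 0
  | Tinf => None
  | T1 => Some 1
  | T1bar => Some (-1)
  | Tprod L R => qadd (Frac R) (qinv (Frac L))
  end.

Fixpoint tbar (e : texpr) : texpr :=
  match e with
  | T1 => T1bar
  | T1bar => T1
  | Tprod L R => Tprod (tbar L) (tbar R)
  | c => c
  end.

Fixpoint rho_x (e : texpr) : texpr :=
  match e with
  | Tprod L R => Tprod (rho_y L) (rho_x R)
  | c => c
  end
with rho_y (e : texpr) : texpr :=
  match e with
  | Tprod L R => Tprod (Tprod (rho_y R) T0) (Tprod (rho_x L) T0)
  | c => c
  end.

Definition T2 : texpr := Tprod (Tprod T1 T0) T1.
Definition T2bar : texpr := Tprod (Tprod T1bar T0) T1bar.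

(* Main.v *)
Require Import Defs.
From HB Require Import structures.
From mathcomp Require Import all_boot all_order all_algebra ring lra.
Import Order.TTheory GRing.Theory Num.Theory.
Local Open Scope ring_scope.

Definition qneg (x : qext) : qext := if x is Some q then Some (- q) else None.

Lemma qinvK x : qinv (qinv x) = x.
Proof.
case: x => [q|] //=; case: (boolP (q == 0)) => [/eqP->|H] //=.
by rewrite invr_eq0 (negbTE H) invrK.
Qed.

Lemma qaddC x y : qadd x y = qadd y x.
Proof. by case: x => [a|]; case: y => [b|] //=; rewrite addrC. Qed.

Lemma qadd0 x : qadd (Some 0) x = x.
Proof. by case: x => [a|] //=; rewrite add0r. Qed.

Lemma qaddSS a b : qadd (Some a) (Some b) = Some (a + b).
Proof. by []. Qed.

Lemma qnegS a : qneg (Some a) = Some (- a).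
Proof. by []. Qed.

Lemma qinvE a b : a * b = 1 -> qinv (Some a) = Some b.
Proof.
move=> H /=; case: (boolP (a == 0)) => [/eqP a0|a0].
  by move: H; rewrite a0 mul0r => /eqP; rewrite eq_sym oner_eq0.
by congr Some; rewrite -[b]mul1r -(mulVf a0) -mulrA H mulr1.
Qed.

Lemma Frac_T0 X : Frac (Tprod X T0) = qinv (Frac X).
Proof. exact: qadd0. Qed.

Lemma Frac_prod L R : Frac (Tprod L R) = qadd (Frac R) (qinv (Frac L)).
Proof. by []. Qed.

Lemma Frac_tbar e : Frac (tbar e) = qneg (Frac e).
Proof.
elim: e => //= L IL R IR; rewrite IL IR.
case: (Frac R) => [r|]; case: (Frac L) => [l|] //=; rewrite ?oppr_eq0 ?addr0 ?oppr0 ?addr0 //.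
by case: ifP => //= _; rewrite opprD invrN.
Qed.

Lemma Frac_rho e : Frac (rho_x e) = Frac e /\ Frac (rho_y e) = Frac e.
Proof.
elim: e => // L [IL1 IL2] R [IR1 IR2]; split.
  change (Frac (Tprod (rho_y L) (rho_x R)) = Frac (Tprod L R)).
  by rewrite !Frac_prod IL2 IR1.
change (Frac (Tprod (Tprod (rho_y R) T0) (Tprod (rho_x L) T0)) = Frac (Tprod L R)).
by rewrite Frac_prod !Frac_T0 Frac_prod IL1 IR2 qinvK qaddC.
Qed.

Lemma FT1 : Frac T1 = Some 1. Proof. by []. Qed.
Lemma FT1b : Frac T1bar = Some (-1). Proof. by []. Qed.
Lemma FT0 : Frac T0 = Some 0. Proof. by []. Qed.

Ltac fld := field; repeat (apply/andP; split); assumption.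
Ltac conc := apply/eqP; vm_compute; reflexivity.

Lemma fl1 x : qadd (Some (-1)) (qinv (qadd (Some 1) (qinv (qadd (Some (-1)) (qinv (qneg x)))))) = x.
Proof.
case: x => [a|]; last conc.
have [->|a0] := eqVneq a 0; first conc.
have [->|a1] := eqVneq a (-1); first conc.
have a1' : a + 1 != 0. by apply: contra_neq a1 => H; lra.
rewrite qnegS (@qinvE _ (-a^-1)); last by fld.
rewrite qaddSS (@qinvE _ (- a / (a+1))); last by fld.
rewrite qaddSS (@qinvE _ (a+1)); last by fld.
by rewrite qaddSS; congr Some; ring.
Qed.

Lemma fl2 x : qinv (qadd (Some 1) (qinv (qadd (Some (-1)) (qinv (qadd (Some 1) (qinv (qinv (qneg x)))))))) = x.
Proof.
case: x => [a|]; last conc.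
have [->|a0] := eqVneq a 0; first conc.
have [->|a1] := eqVneq a (-1); first conc.
have [->|a2] := eqVneq a 1; first conc.
have a3 : a + 1 != 0 by apply: contra_neq a1 => H; lra.
have a4 : a - 1 != 0 by apply: contra_neq a2 => H; lra.
have a5 : 1 - a != 0 by apply: contra_neq a2 => H; lra.
have a6 : -1 - a != 0 by apply: contra_neq a1 => H; lra.
rewrite qinvK qnegS qaddSS (@qinvE _ ((1 + -a)^-1)); last by fld.
rewrite qaddSS (@qinvE _ ((1 - a) / a)); last by fld.
rewrite qaddSS (@qinvE _ a); last by fld. by [].
Qed.

Lemma fl3 x : qinv (qadd (Some (-1)) (qinv (qadd (Some 1) (qinv (qadd (Some (-1)) (qinv (qinv (qneg x)))))))) = x.
Proof.
case: x => [a|]; last conc.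
have [->|a0] := eqVneq a 0; first conc.
have [->|a1] := eqVneq a (-1); first conc.
have [->|a2] := eqVneq a 1; first conc.
have a3 : a + 1 != 0 by apply: contra_neq a1 => H; lra.
have a4 : a - 1 != 0 by apply: contra_neq a2 => H; lra.
have a5 : 1 - a != 0 by apply: contra_neq a2 => H; lra.
have a6 : -1 - a != 0 by apply: contra_neq a1 => H; lra.
rewrite qinvK qnegS qaddSS (@qinvE _ ((-1 + -a)^-1)); last by fld.
rewrite qaddSS (@qinvE _ ((1 + a) / a)); last by fld.
rewrite qaddSS (@qinvE _ a); last by fld. by [].
Qed.

Lemma fl4 x : qadd (Some 1) (qinv (qadd (Some (-1)) (qinv (qadd (Some 1) (qinv (qneg x)))))) = x.
Proof.
case: x => [a|]; last conc.
have [->|a0] := eqVneq a 0; first conc.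
have [->|a1] := eqVneq a (-1); first conc.
have [->|a2] := eqVneq a 1; first conc.
have a3 : a + 1 != 0 by apply: contra_neq a1 => H; lra.
have a4 : a - 1 != 0 by apply: contra_neq a2 => H; lra.
have a5 : 1 - a != 0 by apply: contra_neq a2 => H; lra.
have a6 : -1 - a != 0 by apply: contra_neq a1 => H; lra.
rewrite qnegS (@qinvE _ (-a^-1)); last by fld.
rewrite qaddSS (@qinvE _ (a / (a - 1))); last by fld.
rewrite qaddSS (@qinvE _ (a - 1)); last by fld.
by rewrite qaddSS; congr Some; ring.
Qed.

Theorem lemma6 :
  (* (i) elementary moves *)
  (Frac (Tprod T0 T1) = Frac (Tprod T0 T0) /\
   Frac (Tprod (Tprod T1 T0) T1bar) = Frac T0 /\
   Frac T0 = Frac (Tprod (Tprod T1bar T0) T1)) /\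
  (forall A : texpr,
    (* (ii) twist *)
    (Frac (Tprod (Tprod (Tprod (Tprod T1 T0) (rho_x A)) T0) T1bar) = Frac A /\
     Frac A = Frac (Tprod (Tprod (Tprod (Tprod T1bar T0) (rho_x A)) T0) T1)) /\
    (* (iii) flypes *)
    (Frac (Tprod (Tprod (Tprod (tbar A) T1bar) T1) T1bar)
       = Frac (Tprod (Tprod (Tprod (Tprod (Tprod (tbar A) T0) T1) T1bar) T1) T0) /\
     Frac (Tprod (Tprod (Tprod (Tprod (Tprod (tbar A) T0) T1) T1bar) T1) T0)
       = Frac A /\
     Frac A
       = Frac (Tprod (Tprod (Tprod (Tprod (Tprod (tbar A) T0) T1bar) T1) T1bar) T0) /\
     Frac (Tprod (Tprod (Tprod (Tprod (Tprod (tbar A) T0) T1bar) T1) T1bar) T0)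
       = Frac (Tprod (Tprod (Tprod (tbar A) T1) T1bar) T1)) /\
    (* (iv) ring move *)
    Frac (Tprod (Tprod A T0) (Tprod (Tprod T2 (Tprod T2bar T0)) T0))
      = Frac (Tprod (Tprod T2 (Tprod T2bar T0)) A)).
Proof.
have W : Frac (Tprod (Tprod T2 (Tprod T2bar T0)) T0) = None by conc.
have Z : Frac (Tprod T2 (Tprod T2bar T0)) = Some 0 by conc.
have O : Frac (Tprod T1 T0) = Some 1 by conc.
split; first by split; [conc | split; conc].
move=> A; split; [|split].
- have [Hx _] := Frac_rho A.
  have O' : Frac (Tprod T1bar T0) = Some (-1) by conc.
  have I1 : qinv (Some 1) = Some 1 by conc.
  have I2 : qinv (Some (-1)) = Some (-1) by conc.
  have E1 : Frac (Tprod (Tprod (Tprod (Tprod T1 T0) (rho_x A)) T0) T1bar) = Frac A.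
    rewrite Frac_prod Frac_T0 qinvK Frac_prod O Hx.
    rewrite I1; case: (Frac A) => [a|]; last by []. 
    rewrite qaddSS; change (Some (-1 + (a + 1)) = Some a); congr Some; ring.
  have E2 : Frac (Tprod (Tprod (Tprod (Tprod T1bar T0) (rho_x A)) T0) T1) = Frac A.
    rewrite Frac_prod Frac_T0 qinvK Frac_prod O' Hx.
    rewrite I2; case: (Frac A) => [a|]; last by [].
    rewrite qaddSS; change (Some (1 + (a + -1)) = Some a); congr Some; ring.
  by split; [exact: E1 | exact: (esym E2)].
- have E1 : Frac (Tprod (Tprod (Tprod (tbar A) T1bar) T1) T1bar) = Frac A.
    rewrite !Frac_prod !FT1 !FT1b ?FT0 ?qadd0 Frac_tbar; exact: fl1.
  have E2 : Frac (Tprod (Tprod (Tprod (Tprod (Tprod (tbar A) T0) T1) T1bar) T1) T0) = Frac A.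
    rewrite !Frac_prod !FT1 !FT1b ?FT0 ?qadd0 Frac_tbar; exact: fl2.
  have E3 : Frac (Tprod (Tprod (Tprod (Tprod (Tprod (tbar A) T0) T1bar) T1) T1bar) T0) = Frac A.
    rewrite !Frac_prod !FT1 !FT1b ?FT0 ?qadd0 Frac_tbar; exact: fl3.
  have E4 : Frac (Tprod (Tprod (Tprod (tbar A) T1) T1bar) T1) = Frac A.
    rewrite !Frac_prod !FT1 !FT1b ?FT0 ?qadd0 Frac_tbar; exact: fl4.
  split; first exact: (etrans E1 (esym E2)).
  split; first exact: E2.
  split; first exact: (esym E3).
  exact: (etrans E3 (esym E4)).
- rewrite Frac_prod. rewrite W. rewrite [RHS]Frac_prod. rewrite Z.
  have -> : qinv (Some 0) = None by conc.
  by case: (Frac A).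
Qed.
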